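(* Let $(\alpha_1,\alpha_2)$ be a good pair with canonical representation $(x,y,z)$. Then $x\ge\frac{1+2\sqrt7}{9}=1-2\tau$.
   Context: $\tau=\frac{4-\sqrt7}{9}$. A pair $(\alpha_1,\alpha_2)\in[0,1]^2$ is a good pair if $\max\{\frac14,\frac{\alpha_1+\sqrt{2\alpha_1-1}}{2}\}\le\alpha_2$ and $\max\{\alpha_2,1-\alpha_2,\frac{1+\tau^2}{2}\}\le\alpha_1$, and in addition the unique $(x,y,z)\in[0,1]^3$ with $x+y+z=1$, $x\ge\frac12$, $\alpha_1=x^2+y^2$, $\alpha_2=x^2+z^2$ satisfies $2x^2+z^2\ge1$; this $(x,y,z)$ is the canonical representation. *)

(* Defs.v *)
From Stdlib Require Import Reals.
Open Scope R_scope.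

Definition tau : R := (4 - sqrt 7) / 9.

Definition is_rep (a1 a2 x y z : R) : Prop :=
  0 <= x <= 1 /\ 0 <= y <= 1 /\ 0 <= z <= 1 /\
  x + y + z = 1 /\ x >= 1/2 /\
  a1 = x ^ 2 + y ^ 2 /\ a2 = x ^ 2 + z ^ 2.

Definition good_ineqs (a1 a2 : R) : Prop :=
  0 <= a1 <= 1 /\ 0 <= a2 <= 1 /\
  Rmax (1/4) ((a1 + sqrt (2 * a1 - 1)) / 2) <= a2 /\
  Rmax (Rmax a2 (1 - a2)) ((1 + tau ^ 2) / 2) <= a1.

Definition good_pair (a1 a2 : R) : Prop :=
  good_ineqs a1 a2 /\
  exists x y z : R,
    is_rep a1 a2 x y z /\
    (forall x' y' z' : R, is_rep a1 a2 x' y' z' -> x' = x /\ y' = y /\ z' = z) /\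
    2 * x ^ 2 + z ^ 2 >= 1.

(* Main.v *)
Require Import Defs.
From Stdlib Require Import Reals Lra Psatz.
Open Scope R_scope.

Theorem mainTheorem8 (a1 a2 x y z : R) :
  good_pair a1 a2 ->
  is_rep a1 a2 x y z ->
  (1 + 2 * sqrt 7) / 9 = 1 - 2 * tau /\ x >= (1 + 2 * sqrt 7) / 9.
Proof.
  intros [[_ [_ [_ Hm]]] [x0 [y0 [z0 [Hr0 [Hu Hq]]]]]] Hr.
  destruct (Hu x y z Hr) as [ex [ey ez]]; subst x0 y0 z0.
  split.
  { unfold tau. field. }
  assert (Ha : a2 <= a1).
  { eapply Rle_trans; [| exact Hm].
    eapply Rle_trans; [apply Rmax_l | apply Rmax_l]. }
  destruct Hr as [[Hx0 Hx1] [[Hy0 Hy1] [[Hz0 Hz1] [Hs [Hx [E1 E2]]]]]].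
  subst a1 a2.
  assert (Hyz : z <= y) by nra.
  assert (H9 : 9 * x ^ 2 - 2 * x - 3 >= 0) by nra.
  assert (S7 : sqrt 7 * sqrt 7 = 7) by (apply sqrt_sqrt; lra).
  assert (S0 : 0 <= sqrt 7) by apply sqrt_pos.
  assert (S2 : sqrt 7 < 3).
  { apply Rnot_le_lt; intro; nra. }
  apply Rle_ge.
  apply Rnot_lt_le; intro Hc.
  assert (0 < x - (1 - 2 * sqrt 7) / 9) by lra.
  assert (E : 9 * x ^ 2 - 2 * x - 3 = 9 * (x - (1 + 2 * sqrt 7) / 9) * (x - (1 - 2 * sqrt 7) / 9)) by nra.
  nra.
Qed.
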